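(* In the setting of the context, let $n$ be an iteration index with $R_n=\|Ax_n-y\|\neq0$. Then there exist $t\in\mathbb{R}^{N_n}$ and $S_n>0$ with $h_n(t)\le h_n(0)-S_n$; equivalently, for every $z\in M$ the next iterate satisfies $D_p(x_{n+1},z)\le D_p(x_n,z)-S_n$.
   Context: $X$ is a real smooth, uniformly convex Banach space, $Y$ a real Banach space, $A:X\to Y$ bounded linear with adjoint $A^*$, $y\in\mathcal{R}(A)$, $M=\{x:Ax=y\}$. Fix $p,r\in(1,\infty)$, $p^*=p/(p-1)$. $J_p:X\to X^*$ is the duality mapping with gauge $t^{p-1}$ ($\langle J_p(x),x\rangle=\|x\|^p$, $\|J_p(x)\|=\|x\|^{p-1}$), $J_{p^*}:X^*\to X$ that of $X^*$ with gauge $t^{p^*-1}$ (inverse of $J_p$), $J_r^Y$ a single-valued selection of the duality mapping of $Y$ with gauge $t^{r-1}$. Bregman distance: $D_p(x,z)=\tfrac1{p^*}\|x\|^p-\langle J_p(x),z\rangle+\tfrac1p\|z\|^p$. Method: choose $x_0$ with $J_p(x_0)\in\overline{\mathcal{R}(A^* )}$, fix $N\in\mathbb{N}$, $N_n=\min(N,n+1)$. For $n=0,1,\dots$: $w_n=Ax_n-y$, $R_n=\|w_n\|$; stop if $R_n=0$. Else $u_n^*=J_r^Y(w_n)$, $u_n=A^*u_n^*$. Let $s_n$ minimize $s\mapsto\|u_n-\sum_{i=1}^{N_{n-1}}s_iv_{n-1,i}\|^{p^*}$ (empty sum for $n=0$), set $v_{n,N_n}=u_n-\sum_k s_{n,k}v_{n-1,k}$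 with precursor $w^*_{n,N_n}=u_n^*-\sum_k s_{n,k}w^*_{n-1,k}$; $v_{n,1},\dots,v_{n,N_n-1}$ (with precursors) are the last $N_n-1$ entries of the previous list, in order. Offsets $\beta_{n,k}=\langle w^*_{n,k},y\rangle$. $h_n(t)=\tfrac1{p^*}\|J_p(x_n)-\sum_{k=1}^{N_n}t_kv_{n,k}\|^{p^*}+\sum_k t_k\beta_{n,k}$; $t_n$ minimizes $h_n$ and $x_{n+1}=J_{p^*}(J_p(x_n)-\sum_k t_{n,k}v_{n,k})$. *)

(* Defs.v *)
From mathcomp Require Import all_boot all_order all_algebra.
From mathcomp Require Import all_classical all_reals all_analysis.
Import Order.TTheory GRing.Theory Num.Theory.
Import numFieldNormedType.Exports.

Set Implicit Arguments.
Unset Strict Implicit.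
Unset Printing Implicit Defensive.

Local Open Scope classical_set_scope.
Local Open Scope ring_scope.

Section Setting.
Context {R : realType}.

Definition conj_exp (p : R) : R := p / (p - 1).

(* [pair : Xs -> X -> R] identifies the normed space Xs isometrically with the
   (topological) dual X^* of X: pair is bilinear, the norm of Xs is the dual
   norm, and every continuous linear functional on X is represented. *)
Record dual_pair (X Xs : normedModType R) (pair : Xs -> X -> R) : Prop := {
  dp_linl : forall (a : R) (f g : Xs) (x : X),
      pair (a *: f + g) x = a * pair f x + pair g x;
  dp_linr : forall (f : Xs) (a : R) (x z : X),
      pair f (a *: x + z) = a * pair f x + pair f z;
  dp_norm : forall f : Xs,
      `|f| = sup [set pair f x | x in [set x : X | `|x| <= 1]];
  dp_onto : forall phi : X -> R,
      (forall (a : R) (x z : X), phi (a *: x + z) = a * phi x + phi z) ->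
      continuous phi -> exists f : Xs, forall x, pair f x = phi x }.

Definition uniformly_convex (X : normedModType R) : Prop :=
  forall eps : R, 0 < eps <= 2 ->
  exists2 delta : R, 0 < delta &
    forall x z : X, `|x| = 1 -> `|z| = 1 -> eps <= `|x - z| ->
      `|2^-1 *: (x + z)| <= 1 - delta.

Definition smooth_wrt (X Xs : normedModType R) (pair : Xs -> X -> R) : Prop :=
  forall x : X, x != 0 -> forall f g : Xs,
    `|f| = 1 -> `|g| = 1 -> pair f x = `|x| -> pair g x = `|x| -> f = g.

(* J : E -> F is (a selection of) the duality mapping with gauge t^(q-1),
   w.r.t. the pairing pr between F and E *)
Definition duality_map (E F : normedModType R) (pr : F -> E -> R) (q : R)
  (J : E -> F) : Prop :=
  forall e : E, pr (J e) e = `|e| `^ q /\ `|J e| = `|e| `^ (q - 1).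

Definition lincomb (V : lmodType R) (c : seq R) (v : seq V) : V :=
  \sum_(i < size v) c`_i *: v`_i.

Definition Nn (N n : nat) : nat := minn N n.+1.

Definition shift_list (T : Type) (N n : nat) (prev : seq T) (new : T) : seq T :=
  drop (size prev - (Nn N n).-1) prev ++ [:: new].

Section Method.
Variables (X Y Xs Ys : normedModType R).
Variables (pairX : Xs -> X -> R) (pairY : Ys -> Y -> R).
Variables (A : X -> Y) (Astar : Ys -> Xs) (y : Y) (p : R) (N : nat).
Variables (Jp : X -> Xs) (Jps : Xs -> X) (Jr : Y -> Ys).

Definition Dp (x z : X) : R :=
  (conj_exp p)^-1 * `|x| `^ p - pairX (Jp x) z + p^-1 * `|z| `^ p.

(* h_n(t) for the current iterate xn and lists Vn (directions), Wn (precursors) *)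
Definition hfun (xn : X) (Vn : seq Xs) (Wn : seq Ys) (c : seq R) : R :=
  (conj_exp p)^-1 * `|Jp xn - lincomb c Vn| `^ conj_exp p
  + \sum_(k < size Wn) c`_k * pairY Wn`_k y.

(* The iterates x_0..x_{n+1}, the lists (v_{m,k})_k, (w*_{m,k})_k and the
   minimizers s_m, t_m of the method, for all steps m = 0..n, none of which
   stopped (R_m <> 0). *)
Definition is_run (x : nat -> X) (V : nat -> seq Xs) (W : nat -> seq Ys)
  (s t : nat -> seq R) (n : nat) : Prop :=
  closure (range Astar) (Jp (x 0%N)) /\
  forall m : nat, (m <= n)%N ->
    let wm := A (x m) - y in
    let us := Jr wm in
    let u := Astar us in
    let pV := if m is m'.+1 then V m' else [::] in
    let pW := if m is m'.+1 then W m' else [::] in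
    [/\ wm != 0,
        size (s m) = size pV,
        (forall c : seq R, size c = size pV ->
           `|u - lincomb (s m) pV| `^ conj_exp p
           <= `|u - lincomb c pV| `^ conj_exp p),
        V m = shift_list N m pV (u - lincomb (s m) pV)
      & W m = shift_list N m pW (us - lincomb (s m) pW)] /\
    [/\ size (t m) = Nn N m,
        (forall c : seq R, size c = Nn N m ->
           hfun (x m) (V m) (W m) (t m) <= hfun (x m) (V m) (W m) c)
      & x m.+1 = Jps (Jp (x m) - lincomb (t m) (V m))].

End Method.
End Setting.

(* Main.v *)
Require Import Defs.
From mathcomp Require Import all_boot all_order all_algebra.
From mathcomp Require Import all_classical all_reals all_analysis.
From mathcomp Require Import ring lra zify.
Import Order.TTheory GRing.Theory Num.Theory.
Import numFieldNormedType.Exports.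
Local Open Scope classical_set_scope.
Local Open Scope ring_scope.



Section Pairing.
Context {R : realType} {X Xs : normedModType R} {pr : Xs -> X -> R}.
Hypothesis dp : dual_pair pr.

Lemma pr0l x : pr 0 x = 0.
Proof.
have := dp_linl dp 1 0 0 x; rewrite scale1r addr0 mul1r => H.
by apply: (addrI (pr 0 x)); rewrite addr0 -H.
Qed.

Lemma prZl a f x : pr (a *: f) x = a * pr f x.
Proof. by have := dp_linl dp a f 0 x; rewrite addr0 pr0l addr0. Qed.

Lemma prDl f g x : pr (f + g) x = pr f x + pr g x.
Proof. by have := dp_linl dp 1 f g x; rewrite scale1r mul1r. Qed.

Lemma prNl f x : pr (- f) x = - pr f x.
Proof. by rewrite -scaleN1r prZl mulN1r. Qed.

Lemma prBl f g x : pr (f - g) x = pr f x - pr g x.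
Proof. by rewrite prDl prNl. Qed.

Lemma prsuml (n : nat) (F : 'I_n -> Xs) x :
  pr (\sum_(i < n) F i) x = \sum_(i < n) pr (F i) x.
Proof.
elim: n F => [|n IH] F; first by rewrite !big_ord0 pr0l.
by rewrite !big_ord_recr /= prDl IH.
Qed.

Lemma pr0r f : pr f 0 = 0.
Proof.
have := dp_linr dp f 1 0 0; rewrite scale1r addr0 mul1r => H.
by apply: (addrI (pr f 0)); rewrite addr0 -H.
Qed.

Lemma prZr f a x : pr f (a *: x) = a * pr f x.
Proof. by have := dp_linr dp f a x 0; rewrite addr0 pr0r addr0. Qed.

Lemma prDr f x z : pr f (x + z) = pr f x + pr f z.
Proof. by have := dp_linr dp f 1 x z; rewrite scale1r mul1r. Qed.

Lemma prNr f x : pr f (- x) = - pr f x.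
Proof. by rewrite -scaleN1r prZr mulN1r. Qed.

Lemma prBr f x z : pr f (x - z) = pr f x - pr f z.
Proof. by rewrite prDr prNr. Qed.

Lemma pr_lincomb c (vs : seq Xs) x :
  pr (lincomb c vs) x = \sum_(i < size vs) c`_i * pr vs`_i x.
Proof. by rewrite /lincomb prsuml; apply: eq_bigr => i _; rewrite prZl. Qed.

Lemma pr_ball f x : `|x| <= 1 -> pr f x <= `|f|.
Proof.
move=> x1.
set S := [set pr f x | x in [set x : X | `|x| <= 1]].
have Sx : S (pr f x) by exists x.
have [hs|nhs] := pselect (has_ubound S).
  rewrite (dp_norm dp); apply: sup_upper_bound => //; split => //; by exists (pr f x).
have : sup S = 0 by apply: sup_out => -[].
rewrite -(dp_norm dp) => /normr0_eq0 ->; rewrite pr0l.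
by rewrite normr0.
Qed.

Lemma pr_le f x : pr f x <= `|f| * `|x|.
Proof.
have [->|x0] := eqVneq x 0; first by rewrite pr0r normr0 mulr0.
have nx : 0 < `|x| by rewrite normr_gt0.
have := @pr_ball f (`|x|^-1 *: x).
rewrite normrZ normrV ?unitfE ?normr_eq0 // normr_id mulVf ?normr_eq0 // lexx.
rewrite prZr => /(_ isT) H.
by rewrite -(@ler_pM2l _ `|x|^-1) ?invr_gt0 // mulrCA mulVf ?gt_eqF // mulr1.
Qed.

Lemma pr_abs f x : `|pr f x| <= `|f| * `|x|.
Proof.
rewrite ler_norml pr_le andbT lerNl -prNl -(normrN f); exact: pr_le.
Qed.

Lemma pr_sep f : (forall x, pr f x = 0) -> f = 0.
Proof.
move=> H; apply/normr0_eq0; rewrite (dp_norm dp).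
have -> : [set pr f x | x in [set x : X | `|x| <= 1]] = [set 0].
  apply/seteqP; split => [_ [x _ <-]|_ ->] /=; first by rewrite H.
  by exists 0; rewrite ?normr0 ?pr0r.
by rewrite sup1.
Qed.

End Pairing.



Section Exps.
Context {R : realType} {p : R}.
Hypothesis p1 : 1 < p.
Let q := conj_exp p.

Lemma p_gt0 : 0 < p. Proof. have := p1; lra. Qed.
Lemma pm1_neq0 : p - 1 != 0. Proof. have := p1; move=> h; apply/eqP; lra. Qed.
Lemma q_eq : q - 1 = (p - 1)^-1.
Proof. rewrite /q /conj_exp; have := pm1_neq0; move=> h; field; exact: h. Qed.
Lemma q_gt1 : 1 < q.
Proof. have := q_eq; have : 0 < (p - 1)^-1 by rewrite invr_gt0 subr_gt0. lra. Qed.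
Lemma exp_pq : (p - 1) * (q - 1) = 1.
Proof. by rewrite q_eq mulfV // pm1_neq0. Qed.
Lemma exp_qp : (q - 1) * p = q.
Proof. rewrite q_eq /q /conj_exp; have := pm1_neq0 => h; field; exact: h. Qed.
Lemma exp_pq2 : (p - 1) * q = p.
Proof. rewrite /q /conj_exp; have := pm1_neq0 => h; field; exact: h. Qed.
Lemma exp_inv : p^-1 + q^-1 = 1.
Proof.
rewrite /q /conj_exp; have := pm1_neq0 => h; have hp : p != 0 by have := p1 => h0; apply/eqP; lra.
by field; rewrite h hp.
Qed.

Lemma pw_pq t : 0 <= t -> (t `^ (p - 1)) `^ (q - 1) = t.
Proof. by move=> t0; rewrite -powRrM exp_pq powRr1. Qed.
Lemma pw_qp t : 0 <= t -> (t `^ (q - 1)) `^ (p - 1) = t.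
Proof. by move=> t0; rewrite -powRrM mulrC exp_pq powRr1. Qed.
Lemma pw_qp2 t : (t `^ (q - 1)) `^ p = t `^ q.
Proof. by rewrite -powRrM exp_qp. Qed.
Lemma pw_pq2 t : (t `^ (p - 1)) `^ q = t `^ p.
Proof. by rewrite -powRrM exp_pq2. Qed.
End Exps.



Section UC.
Context {R : realType} {X : normedModType R}.
Hypothesis uc : uniformly_convex X.

Lemma ucL (L eps : R) : 0 < L -> 0 < eps <= 2 ->
  exists2 d : R, 0 < d & forall a b : X, `|a| = L -> `|b| = L ->
    eps * L <= `|a - b| -> `|a + b| <= 2 * L * (1 - d).
Proof.
move=> L0 he; have [d d0 H] := uc eps he; exists d => // a b na nb hab.
have L0' : L != 0 by rewrite gt_eqF.
have Li : 0 <= L^-1 by rewrite invr_ge0 ltW.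
have n1 : forall c : X, `|c| = L -> `|L^-1 *: c| = 1.
  by move=> c nc; rewrite normrZ nc ger0_norm // mulVf.
have h3 : eps <= `|L^-1 *: a - L^-1 *: b|.
  rewrite -scalerBr normrZ ger0_norm //.
  by rewrite -(ler_pM2l L0) mulrA mulfV // mul1r mulrC.
have := H _ _ (n1 a na) (n1 b nb) h3.
rewrite -scalerDr scalerA normrZ ger0_norm; last by rewrite mulr_ge0.
move=> H4; have HL : 0 < 2 * L by rewrite mulr_gt0.
rewrite -(@ler_pM2l _ (2^-1 / L)); last by rewrite divr_gt0.
rewrite (_ : 2^-1 / L * (2 * L * (1 - d)) = 1 - d) //; field; exact: L0'.
Qed.

Lemma strict_conv (a b : X) : `|a| = `|b| -> 2 * `|a| <= `|a + b| -> a = b.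
Proof.
move=> nab hab.
have [a0|a0] := eqVneq a 0.
  by move: nab; rewrite a0 normr0 => /esym/normr0_eq0 ->.
have L0 : 0 < `|a| by rewrite normr_gt0.
apply/eqP; rewrite -subr_eq0; apply/negPn/negP => hd.
have hd0 : 0 < `|a - b| by rewrite normr_gt0.
set eps := Num.min (`|a - b| / `|a|) 2.
have he : 0 < eps <= 2.
  by rewrite /eps lt_min ge_min lexx orbT andbT divr_gt0 // ltr0n.
have [d d0 H] := ucL _ _ L0 he.
have := H a b erefl (esym nab).
have : eps * `|a| <= `|a - b|.
  rewrite /eps; apply: (le_trans (y := (`|a - b| / `|a|) * `|a|)).
    by rewrite ler_pM2r // ge_min lexx.
  by rewrite mulfVK // gt_eqF.
move=> h1 /(_ h1) h2.
have : 2 * `|a| <= 2 * `|a| * (1 - d) by apply: le_trans h2.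
have : 0 < 2 * `|a| by rewrite mulr_gt0.
move: d0; nra.
Qed.
End UC.



Section Duality.
Context {R : realType} {X Xs : normedModType R} {pr : Xs -> X -> R}.
Variables (Jp : X -> Xs) (Jps : Xs -> X) (p : R).
Hypothesis dp : dual_pair pr.
Hypothesis uc : uniformly_convex X.
Hypothesis sm : smooth_wrt pr.
Hypothesis p1 : 1 < p.
Hypothesis hJp : duality_map pr p Jp.
Hypothesis hJps : duality_map (fun (v : X) (f : Xs) => pr f v) (conj_exp p) Jps.
Let q := conj_exp p.

Lemma nJp x : `|Jp x| = `|x| `^ (p - 1). Proof. by case: (hJp x). Qed.
Lemma pJp x : pr (Jp x) x = `|x| `^ p. Proof. by case: (hJp x). Qed.
Lemma nJps e : `|Jps e| = `|e| `^ (q - 1). Proof. by case: (hJps e). Qed.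
Lemma pJps e : pr e (Jps e) = `|e| `^ q. Proof. by case: (hJps e). Qed.

Lemma pm1n0 : p - 1 != 0. Proof. exact: pm1_neq0. Qed.
Lemma qm1n0 : q - 1 != 0.
Proof. rewrite q_eq //; apply: invr_neq0; exact: pm1n0. Qed.

Lemma Jp0 : Jp 0 = 0.
Proof. by apply/normr0_eq0; rewrite nJp normr0 powR0 // pm1n0. Qed.
Lemma Jps0 : Jps 0 = 0.
Proof. by apply/normr0_eq0; rewrite nJps normr0 powR0 // qm1n0. Qed.

Lemma JpsJp x : Jps (Jp x) = x.
Proof.
have [->|x0] := eqVneq x 0; first by rewrite Jp0 Jps0.
set z := Jps (Jp x).
have nx : 0 < `|x| by rewrite normr_gt0.
have nz : `|z| = `|x| by rewrite /z nJps nJp pw_pq.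
have pz : pr (Jp x) z = `|x| `^ p by rewrite /z pJps nJp pw_pq2.
apply: esym; apply: (strict_conv uc); first by rewrite nz.
have h := pr_le dp (Jp x) (x + z).
rewrite (prDr dp) pz pJp nJp in h.
have e : `|x| `^ p = `|x| * `|x| `^ (p - 1) by rewrite mulr_powRB1 // ?ltW // p_gt0.
rewrite e in h.
have hp : 0 < `|x| `^ (p - 1) by apply: powR_gt0.
rewrite -(ler_pM2l hp); move: h; nra.
Qed.

Lemma JpJps e : Jp (Jps e) = e.
Proof.
have [->|e0] := eqVneq e 0; first by rewrite Jps0 Jp0.
have ne : 0 < `|e| by rewrite normr_gt0.
set x := Jps e.
have nx : `|x| = `|e| `^ (q - 1) by rewrite /x nJps.
have nx0 : 0 < `|x| by rewrite nx powR_gt0.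
have x0 : x != 0 by rewrite -normr_gt0.
have nf : `|Jp x| = `|e| by rewrite nJp nx pw_qp // ltW.
have xp : `|x| `^ p = `|e| `^ q by rewrite nx pw_qp2.
have eq1 : `|e| * `|x| = `|e| `^ q by rewrite nx mulr_powRB1 // (lt_trans ltr01) // q_gt1.
have ie : `|e|^-1 != 0 by rewrite invr_eq0 gt_eqF.
have ni : forall f : Xs, `|f| = `|e| -> `| `|e|^-1 *: f| = 1.
  by move=> f nf'; rewrite normrZ nf' ger0_norm ?invr_ge0 ?ltW // mulVf // gt_eqF.
have := @sm x x0 _ _ (ni _ nf) (ni e erefl).
have pe : pr e x = `|e| `^ q by rewrite /x pJps.
rewrite !(prZl dp) pJp pe xp -eq1 mulrA mulVf ?gt_eqF // mul1r.
move=> H; apply: (scalerI ie); exact: H.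
Qed.

Lemma subgrad (eta zeta : Xs) :
  pr eta (Jps zeta) - `|zeta| `^ q <= q^-1 * `|eta| `^ q - q^-1 * `|zeta| `^ q.
Proof.
have h1 := pr_le dp eta (Jps zeta); rewrite nJps in h1.
have h2 := conjugate_powR (normr_ge0 eta) (powR_ge0 `|zeta| (q - 1))
  (lt_trans ltr01 (q_gt1 p1)) (p_gt0 p1) (etrans (addrC _ _) (exp_inv p1)).
rewrite (pw_qp2 p1) in h2.
have e : p^-1 = 1 - q^-1 by rewrite -(exp_inv p1) addrK.
rewrite e in h2.
move: h1 h2; rewrite /q; lra.
Qed.
End Duality.



Lemma powR_cont_at {R : realType} (r Z eps : R) : 0 < Z -> 0 < eps ->
  exists2 d, 0 < d & forall t, `|t - Z| < d -> `|t `^ r - Z `^ r| < eps.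
Proof.
move=> Z0 e0.
have hc : {for Z, continuous (@powR R ^~ r)}.
  apply: differentiable_continuous; apply/derivable1_diffP.
  by apply: derivable_powR; rewrite in_itv /= Z0.
have := @cvgr_distC_lt _ R _ _ _ (@powR R ^~ r) (Z `^ r) hc _ e0 => H.
have [d /= d0 H2] := iffLR (nbhs_normP _ _) (H _).
exists d => // t ht; apply: (H2 t) => /=; by rewrite distrC.
Qed.

Section Cont.
Context {R : realType} {X Xs : normedModType R} {pr : Xs -> X -> R}.
Variables (Jp : X -> Xs) (Jps : Xs -> X) (p : R).
Hypothesis dp : dual_pair pr.
Hypothesis uc : uniformly_convex X.
Hypothesis p1 : 1 < p.
Hypothesis hJps : duality_map (fun (v : X) (f : Xs) => pr f v) (conj_exp p) Jps.
Let q := conj_exp p.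

Let nJps e : `|Jps e| = `|e| `^ (q - 1). Proof. by case: (hJps e). Qed.
Let pJps e : pr e (Jps e) = `|e| `^ q. Proof. by case: (hJps e). Qed.
Let q1 : 1 < q. Proof. exact: q_gt1. Qed.
Let qm1 : 0 < q - 1. Proof. by rewrite subr_gt0. Qed.

Lemma Jps_cont (zeta : Xs) (eps : R) : 0 < eps ->
  exists2 del, 0 < del & forall z, `|z - zeta| < del ->
    `|Jps z - Jps zeta| < eps.
Proof.
move=> e0.
have [z0|nz0] := eqVneq zeta 0.
  have Jz : Jps zeta = 0 by apply/normr0_eq0; rewrite nJps z0 normr0 powR0 // gt_eqF.
  exists (eps `^ (q - 1)^-1); first by rewrite powR_gt0.
  move=> z; rewrite Jz z0 !subr0 nJps => hz.
  have H := @gt0_ltr_powR R (q - 1) qm1 `|z| (eps `^ (q - 1)^-1).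
  have := H (ltac:(by rewrite nnegrE)) (ltac:(by rewrite nnegrE powR_ge0)) hz.
  by rewrite -powRrM mulVf ?gt_eqF // powRr1 // ltW.
set Z := `|zeta|.
have Z0 : 0 < Z by rewrite normr_gt0.
set L := Z `^ (q - 1).
have L0 : 0 < L by rewrite powR_gt0.
set x := Jps zeta.
have nx : `|x| = L by rewrite /x nJps.
have px : pr zeta x = Z * L by rewrite /x pJps /L mulr_powRB1 ?ltW // (lt_trans ltr01).
set e1 := Num.min (eps / (2 * L)) 2.
have he1 : 0 < e1 <= 2.
  by rewrite /e1 lt_min ge_min lexx orbT andbT divr_gt0 ?mulr_gt0 // ltr0n.
have e1L : e1 * L <= eps / 2.
  have -> : eps / 2 = (eps / (2 * L)) * L by field; rewrite gt_eqF.
  by rewrite ler_pM2r // ge_min lexx.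
have [d1 d10 Huc] := ucL uc _ _ L0 he1.
have e2 : 0 < eps / 2 by rewrite divr_gt0.
have [d2 d20 Hpw] := powR_cont_at (q - 1) _ _ Z0 e2.
set D := Num.min Z (Num.min (Z * d1) d2).
exists D; first by rewrite /D !lt_min Z0 d20 mulr_gt0.
move=> z hz; set d := `|z - zeta|.
have dZ : d < Z by move: hz; rewrite /D !lt_min => /and3P[].
have dZ1 : d < Z * d1 by move: hz; rewrite /D !lt_min => /and3P[].
have dd2 : d < d2 by move: hz; rewrite /D !lt_min => /and3P[].
have d0 : 0 <= d by rewrite normr_ge0.
set N := `|z|.
have hNZ : `|N - Z| <= d by rewrite /N /Z ler_dist_dist.
have hN : Z - d <= N by move: hNZ; rewrite ler_norml; lra.
have N0 : 0 < N by lra.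
set x' := Jps z.
set L' := N `^ (q - 1).
have L'0 : 0 < L' by rewrite powR_gt0.
have nx' : `|x'| = L' by rewrite /x' nJps.
have px' : pr z x' = N * L' by rewrite /x' pJps /L' mulr_powRB1 ?ltW // (lt_trans ltr01).
have h1 : pr zeta x' >= L' * (Z - 2 * d).
  have e : zeta = z - (z - zeta) by rewrite opprB addrC subrK.
  rewrite e (prBl dp) px'.
  have := pr_abs dp (z - zeta) x'; rewrite nx' -/d ler_norml => /andP[_ h].
  have : L' * (Z - 2 * d) <= N * L' - d * L' by nra.
  lra.
pose a : X := (L / L') *: x'.
have na : `|a| = L.
  by rewrite /a normrZ nx' ger0_norm ?divr_ge0 ?ltW // mulfVK // gt_eqF.
have h2 : pr zeta a >= L * (Z - 2 * d).
  rewrite /a (prZr dp).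
  have -> : L * (Z - 2 * d) = L / L' * (L' * (Z - 2 * d)) by field; rewrite gt_eqF.
  by rewrite ler_pM2l // divr_gt0.
have h3 : L * (2 * Z - 2 * d) <= Z * `|a + x|.
  have := pr_le dp zeta (a + x); rewrite (prDr dp) px -/Z.
  lra.
have hax : `|a - x| < e1 * L.
  rewrite ltNge; apply/negP => hge.
  have h4 := Huc a x na nx hge.
  have : Z * `|a + x| <= Z * (2 * L * (1 - d1)) by rewrite ler_pM2l.
  move=> h5.
  have : L * (Z * d1) <= L * d by nra.
  rewrite ler_pM2l // => h6; lra.
have hxa : `|x' - a| < eps / 2.
  have -> : x' - a = ((L' - L) / L') *: x'.
    rewrite /a -{1}(scale1r x') -scalerBl; congr (_ *: _); field; by rewrite gt_eqF.
  rewrite normrZ nx' normrM normfV (gtr0_norm L'0) mulfVK ?gt_eqF //.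
  by apply: Hpw; apply: le_lt_trans hNZ dd2.
have := ler_distD a x' x.
move: hax e1L hxa; rewrite distrC; lra.
Qed.
End Cont.



Section Dec.
Context {R : realType} {X Xs : normedModType R} {pr : Xs -> X -> R}.
Variables (Jp : X -> Xs) (Jps : Xs -> X) (p : R).
Hypothesis dp : dual_pair pr.
Hypothesis uc : uniformly_convex X.
Hypothesis p1 : 1 < p.
Hypothesis hJps : duality_map (fun (v : X) (f : Xs) => pr f v) (conj_exp p) Jps.
Let q := conj_exp p.

Lemma dec (zeta v : Xs) (beta : R) : beta < pr v (Jps zeta) ->
  exists2 tau, 0 < tau &
    q^-1 * `|zeta - tau *: v| `^ q + tau * beta < q^-1 * `|zeta| `^ q.
Proof.
move=> hb.
set g := pr v (Jps zeta) - beta.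
have g0 : 0 < g by rewrite subr_gt0.
set M := `|v| + 1.
have M0 : 0 < M by rewrite /M ltr_pwDr.
have gM : 0 < g / M by rewrite divr_gt0.
have [del d0 H] := Jps_cont Jps p dp uc p1 hJps zeta (g / M) gM.
set tau := del / (2 * M).
have t0 : 0 < tau by rewrite divr_gt0 // mulr_gt0.
exists tau => //.
set z' := zeta - tau *: v.
have hz : `|z' - zeta| < del.
  rewrite /z' addrAC subrr add0r normrN normrZ gtr0_norm //.
  have : tau * `|v| <= tau * M by rewrite ler_pM2l // /M lerDl.
  have : tau * M = del / 2 by rewrite /tau; field; rewrite gt_eqF.
  lra.
have H1 := H z' hz.
have H2 := pr_abs dp v (Jps z' - Jps zeta).
have H3 : `|v| * `|Jps z' - Jps zeta| <= `|v| * (g / M).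
  by rewrite ler_wpM2l // ltW.
have H4 : `|v| * (g / M) < g.
  have e : M * (g / M) = g by rewrite mulrC divfK // gt_eqF.
  rewrite -{2}e ltr_pM2r // /M; lra.
have H5 : beta < pr v (Jps z').
  move: H2; rewrite (prBr dp) ler_norml => /andP[h _].
  have eg : g = pr v (Jps zeta) - beta by []. move: eg H3 H4 h; clearbody g; lra.
have H6 := subgrad Jps p dp p1 hJps zeta z'.
have ez : zeta = z' + tau *: v by rewrite /z' subrK.
have H7 : pr zeta (Jps z') = `|z'| `^ q + tau * pr v (Jps z').
  by rewrite {1}ez (prDl dp) (prZl dp) (pJps Jps p hJps).
rewrite H7 in H6.
have : tau * beta < tau * pr v (Jps z') by rewrite ltr_pM2l.
rewrite -/z' /q; move: H6; rewrite /q; lra.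
Qed.
End Dec.



Lemma shift_rel (T1 T2 : Type) (P : T1 -> T2 -> Prop) (x1 : T1) (x2 : T2)
  N m (l1 : seq T1) (l2 : seq T2) n1 n2 :
  size l1 = size l2 -> P x1 x2 -> (forall k, P (nth x1 l1 k) (nth x2 l2 k)) ->
  P n1 n2 ->
  forall k, P (nth x1 (shift_list N m l1 n1) k) (nth x2 (shift_list N m l2 n2) k).
Proof.
move=> hs P0 Pl Pn k; rewrite /shift_list !nth_cat !size_drop hs.
case: ifP => _; first by rewrite !nth_drop.
by case: (k - _)%N => [|j] //=; rewrite !nth_nil.
Qed.

Lemma size_shift (T : Type) N m (l : seq T) new : (0 < N)%N ->
  size l = (if m is m'.+1 then Nn N m' else 0%N) ->
  size (shift_list N m l new) = Nn N m.
Proof.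
move=> N0 hl; rewrite /shift_list size_cat size_drop /= hl /Nn.
case: m hl => [|m] _ /=; lia.
Qed.

Lemma nth_shift_last (T : Type) (x0 : T) N m (l : seq T) new : (0 < N)%N ->
  size l = (if m is m'.+1 then Nn N m' else 0%N) ->
  nth x0 (shift_list N m l new) (Nn N m).-1 = new.
Proof.
move=> N0 hl; rewrite /shift_list nth_cat size_drop hl.
have -> : ((Nn N m).-1 < (if m is m'.+1 then Nn N m' else 0) - ((if m is m'.+1 then Nn N m' else 0) - (Nn N m).-1))%N = false.
  rewrite /Nn; case: m hl => [|m] _ /=; lia.
have -> : ((Nn N m).-1 - ((if m is m'.+1 then Nn N m' else 0) - ((if m is m'.+1 then Nn N m' else 0) - (Nn N m).-1)))%N = 0%N.
  rewrite /Nn; case: m hl => [|m] _ /=; lia.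
by [].
Qed.

Section Lin.
Context {R : realType}.

Lemma sum_delta (V : lmodType R) n k (a : V) : (k < n)%N ->
  \sum_(i < n) (if (i : nat) == k then a else 0) = a.
Proof.
move=> kn; rewrite (bigD1 (Ordinal kn)) //= eqxx big1 ?addr0 //.
by move=> i /negbTE; rewrite -(inj_eq val_inj) /= => ->.
Qed.

Lemma lincomb_set (V : lmodType R) c (vs : seq V) k tau : (k < size vs)%N ->
  lincomb (set_nth 0 c k (c`_k + tau)) vs = lincomb c vs + tau *: vs`_k.
Proof.
move=> kn; rewrite /lincomb.
rewrite (eq_bigr (fun i : 'I_(size vs) => c`_i *: vs`_i +
   (if (i : nat) == k then tau *: vs`_k else 0))); last first.
  move=> i _; rewrite nth_set_nth /=; case: eqP => [->|_]; last by rewrite addr0.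
  by rewrite scalerDl.
by rewrite big_split /= sum_delta.
Qed.

Lemma sum_set (c b : seq R) n k tau : (k < n)%N ->
  \sum_(i < n) (set_nth 0 c k (c`_k + tau))`_i * b`_i =
  \sum_(i < n) c`_i * b`_i + tau * b`_k.
Proof.
move=> kn.
rewrite (eq_bigr (fun i : 'I_n => c`_i * b`_i +
   (if (i : nat) == k then tau * b`_k else 0))); last first.
  move=> i _; rewrite nth_set_nth /=; case: eqP => [->|_]; last by rewrite addr0.
  by rewrite mulrDl.
by rewrite big_split /= (@sum_delta R^o).
Qed.

Lemma lincomb0 (V : lmodType R) n (vs : seq V) : lincomb (nseq n 0) vs = 0.
Proof. by rewrite /lincomb big1 // => i _; rewrite nth_nseq if_same scale0r. Qed.

Lemma sum0 n m (b : seq R) : \sum_(i < m) (nseq n 0)`_i * b`_i = 0.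
Proof. by rewrite big1 // => i _; rewrite nth_nseq if_same mul0r. Qed.
End Lin.



Section Opt.
Context {R : realType} {X Xs : normedModType R} {pr : Xs -> X -> R}.
Variables (Jp : X -> Xs) (Jps : Xs -> X) (p : R).
Hypothesis dp : dual_pair pr.
Hypothesis uc : uniformly_convex X.
Hypothesis p1 : 1 < p.
Hypothesis hJps : duality_map (fun (v : X) (f : Xs) => pr f v) (conj_exp p) Jps.
Variables (Y Ys : normedModType R) (pairY : Ys -> Y -> R) (y : Y).

Lemma hfun_set xn (Vn : seq Xs) (Wn : seq Ys) c k tau :
  (k < size Vn)%N -> size Vn = size Wn ->
  hfun pairY y p Jp xn Vn Wn (set_nth 0 c k (c`_k + tau)) =
  (conj_exp p)^-1 * `|(Jp xn - lincomb c Vn) - tau *: Vn`_k| `^ conj_exp p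
  + (\sum_(i < size Wn) c`_i * pairY Wn`_i y + tau * pairY Wn`_k y).
Proof.
move=> kn hs; rewrite /hfun lincomb_set // opprD addrA.
congr (_ + _).
have e : forall d : seq R, \sum_(i < size Wn) d`_i * pairY Wn`_i y =
   \sum_(i < size Wn) d`_i * [seq pairY w y | w <- Wn]`_i.
  by move=> d; apply: eq_bigr => i _; rewrite (nth_map 0).
rewrite !e sum_set -?hs // (nth_map 0) -?hs //.
Qed.

Lemma hfun_zero xn (Vn : seq Xs) (Wn : seq Ys) n :
  hfun pairY y p Jp xn Vn Wn (nseq n 0) =
  (conj_exp p)^-1 * `|Jp xn| `^ conj_exp p.
Proof.
rewrite /hfun lincomb0 subr0 big1 ?addr0 // => i _.
by rewrite nth_nseq if_same mul0r.
Qed.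

Lemma opt xn (Vn : seq Xs) (Wn : seq Ys) (c : seq R) :
  size Vn = size Wn -> size c = size Vn ->
  (forall c', size c' = size Vn ->
     hfun pairY y p Jp xn Vn Wn c <= hfun pairY y p Jp xn Vn Wn c') ->
  forall k, (k < size Vn)%N ->
    pr Vn`_k (Jps (Jp xn - lincomb c Vn)) = pairY Wn`_k y.
Proof.
move=> hs hc hmin k kn.
set eta := Jp xn - lincomb c Vn.
have hsz : forall tau, size (set_nth 0 c k (c`_k + tau)) = size Vn.
  by move=> tau; rewrite size_set_nth hc; apply/maxn_idPr.
have h0 : hfun pairY y p Jp xn Vn Wn c =
   (conj_exp p)^-1 * `|eta| `^ conj_exp p + \sum_(i < size Wn) c`_i * pairY Wn`_i y.
  by [].
set v := Vn`_k; set b := pairY Wn`_k y.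
have hk : (k < size Vn)%N := kn.
case: (ltgtP (pr v (Jps eta)) b) => // hgb.
- have hb : - b < pr (- v) (Jps eta) by rewrite (prNl dp) ltrN2.
  have [tau t0 H] := dec Jps p dp uc p1 hJps eta (- v) (- b) hb.
  have := hmin _ (hsz (- tau)); rewrite h0 hfun_set //.
  rewrite -/eta -/v -/b scaleNr; rewrite scalerN in H.
  move: H; rewrite mulrN mulNr; lra.
- have [tau t0 H] := dec Jps p dp uc p1 hJps eta v b hgb.
  have := hmin _ (hsz tau); rewrite h0 hfun_set // -/eta -/v -/b.
  move: H; lra.
Qed.
End Opt.



Lemma new_rel {R : realType} (X Y Xs Ys : normedModType R)
  (pairX : Xs -> X -> R) (pairY : Ys -> Y -> R) (A : X -> Y) (Astar : Ys -> Xs)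
  (dpX : dual_pair pairX) (dpY : dual_pair pairY)
  (adj : forall (u : Ys) (v : X), pairX (Astar u) v = pairY u (A v))
  (pV : seq Xs) (pW : seq Ys) (s : seq R) (us : Ys) :
  size pV = size pW ->
  (forall k v, pairX pV`_k v = pairY pW`_k (A v)) ->
  forall v, pairX (Astar us - lincomb s pV) v = pairY (us - lincomb s pW) (A v).
Proof.
move=> hs H v; rewrite (prBl dpX) (prBl dpY) adj !(pr_lincomb dpX) (pr_lincomb dpY).
rewrite hs; congr (_ - _); apply: eq_bigr => i _; by rewrite H.
Qed.

Theorem mainTheorem2 (R : realType)
  (X Y : completeNormedModType R) (Xs Ys : normedModType R)
  (pairX : Xs -> X -> R) (pairY : Ys -> Y -> R)
  (A : X -> Y) (Astar : Ys -> Xs) (y : Y) (p r : R) (N : nat)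
  (Jp : X -> Xs) (Jps : Xs -> X) (Jr : Y -> Ys)
  (x : nat -> X) (V : nat -> seq Xs) (W : nat -> seq Ys) (s t : nat -> seq R)
  (n : nat) :
  dual_pair pairX -> dual_pair pairY ->
  uniformly_convex X -> smooth_wrt pairX ->
  (forall (a : R) (u v : X), A (a *: u + v) = a *: A u + A v) ->
  continuous A ->
  (forall (u : Ys) (v : X), pairX (Astar u) v = pairY u (A v)) ->
  (exists x0 : X, A x0 = y) ->
  1 < p -> 1 < r -> (0 < N)%N ->
  duality_map pairX p Jp ->
  duality_map (fun (v : X) (f : Xs) => pairX f v) (conj_exp p) Jps ->
  duality_map pairY r Jr ->
  is_run pairY A Astar y p N Jp Jps Jr x V W s t n ->
  exists tt : seq R, size tt = Nn N n /\
  exists S : R, 0 < S /\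
    hfun pairY y p Jp (x n) (V n) (W n) tt
      <= hfun pairY y p Jp (x n) (V n) (W n) (nseq (Nn N n) 0) - S /\
    (forall z : X, A z = y ->
       Dp pairX p Jp (x n.+1) z <= Dp pairX p Jp (x n) z - S).
Proof.
move=> dpX dpY ucX smX Alin Acont adj [z0 Az0] p1 r1 N0 hJp hJps hJr [hx0 hrun].
have inv : forall m, (m <= n)%N -> [/\ size (V m) = Nn N m, size (W m) = Nn N m &
   forall k v, pairX (V m)`_k v = pairY (W m)`_k (A v)].
  elim=> [|m IH] hm; move: (hrun _ hm) => /= [[wm0 hs hsm hV hW] _].
  - rewrite hV hW; split; [exact: size_shift|exact: size_shift|].
    apply: (@shift_rel _ _ (fun f w => forall v, pairX f v = pairY w (A v))).
    + by [].
    + by move=> v; rewrite (pr0l dpX) (pr0l dpY).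
    + by move=> k v; rewrite !nth_nil (pr0l dpX) (pr0l dpY).
    + apply: (@new_rel _ _ _ _ _ _ _ A Astar dpX dpY adj) => // k v.
      by rewrite !nth_nil (pr0l dpX) (pr0l dpY).
  - have [IH1 IH2 IH3] := IH (ltnW hm).
    rewrite hV hW; split; [by apply: size_shift|by apply: size_shift|].
    apply: (@shift_rel _ _ (fun f w => forall v, pairX f v = pairY w (A v))).
    + by rewrite IH1 IH2.
    + by move=> v; rewrite (pr0l dpX) (pr0l dpY).
    + by [].
    + by apply: (@new_rel _ _ _ _ _ _ _ A Astar dpX dpY adj) => //; rewrite IH1 IH2.
have [hsVn hsWn relN] := inv n (leqnn n).
move: (hrun n (leqnn n)) => /= [[wn0 hsn hsmn hVn hWn] [htn hmin hxn1]].
set q := conj_exp p.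
set xi := Jp (x n).
have Nn0 : (0 < Nn N n)%N by rewrite /Nn; lia.
set kl := (Nn N n).-1.
have kln : (kl < size (V n))%N by rewrite hsVn /kl; lia.
set v := (V n)`_kl.
set b := pairY (W n)`_kl y.
set wn := A (x n) - y.
set pW := (if n is m'.+1 then W m' else [::]).
have hpW : size pW = (if n is m'.+1 then Nn N m' else 0%N).
  rewrite /pW; case: (n) inv => [|m] //= inv'.
  by have [] := inv' m (leqnSn m).
have lastW : (W n)`_kl = Jr wn - lincomb (s n) pW.
  by rewrite hWn /kl nth_shift_last.
have hsum0 : \sum_(i < size pW) (s n)`_i * pairY pW`_i wn = 0.
  rewrite /pW; case En : n => [|m]; first by rewrite big_ord0.
  have hmn : (m <= n)%N by rewrite En.
  have [hs1 hs2 hrel] := inv m hmn.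
  move: (hrun m hmn) => /= [_ [htm hminm hxm]].
  apply: big1 => i _.
  have iV : (i < size (V m))%N by rewrite hs1 -hs2.
  rewrite /wn (prBr dpY) -hrel En hxm.
  rewrite (opt Jp Jps p dpX ucX p1 hJps _ _ pairY y (x m) (V m) (W m) (t m)) ?subrr ?mulr0 //.
  - by rewrite hs1 hs2.
  - by rewrite htm hs1.
  - by move=> c'; rewrite hs1; apply: hminm.
have hszV : size pW = size (if n is m'.+1 then V m' else [::]).
  rewrite hpW; case En : n => [|m] //.
  have hmn : (m <= n)%N by rewrite En.
  by have [] := inv m hmn.
have claim : b < pairX v (Jps xi).
  rewrite /xi (JpsJp Jp Jps p dpX ucX p1 hJp hJps) /v relN.
  rewrite -subr_gt0 -(prBr dpY) -/wn lastW (prBl dpY) (pr_lincomb dpY) hsum0 subr0.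
  have [-> _] := hJr wn.
  by rewrite powR_gt0 // normr_gt0.
have [tau t0 H] := dec Jps p dpX ucX p1 hJps xi v b claim.
set c := set_nth 0 (nseq (Nn N n) 0) kl ((nseq (Nn N n) 0)`_kl + tau).
have hc : size c = Nn N n.
  by rewrite /c size_set_nth size_nseq; apply/maxn_idPr; rewrite -hsVn.
have hmc := hmin c hc.
have hsVW : size (V n) = size (W n) by rewrite hsVn hsWn.
rewrite /c (hfun_set Jp p) // lincomb0 subr0 in hmc.
rewrite big1 ?add0r in hmc; last by move=> i _; rewrite nth_nseq if_same mul0r.
have h0 := hfun_zero Jp p _ _ pairY y (x n) (V n) (W n) (Nn N n).
set h0v := hfun pairY y p Jp (x n) (V n) (W n) (nseq (Nn N n) 0) in h0 *.
set htv := hfun pairY y p Jp (x n) (V n) (W n) (t n) in hmc *.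
have hlt : htv < h0v.
  by rewrite h0; apply: le_lt_trans hmc H.
exists (t n); split => //; exists (h0v - htv); split; first by rewrite subr_gt0.
split; first by rewrite opprB addrC subrK /htv.
move=> z Az.
set eta := Jp (x n) - lincomb (t n) (V n).
set sb := \sum_(i < size (W n)) (t n)`_i * pairY (W n)`_i y.
have e1 : Dp pairX p Jp (x n.+1) z =
    q^-1 * `|eta| `^ q - pairX eta z + p^-1 * `|z| `^ p.
  rewrite /Dp hxn1 (JpJps Jp Jps p dpX smX p1 hJp hJps).
  by rewrite (nJps Jps p hJps) (pw_qp2 p1).
have e2 : pairX eta z = pairX xi z - sb.
  rewrite /eta (prBl dpX) (pr_lincomb dpX) /sb -hsVW; congr (_ - _).
  by apply: eq_bigr => i _; rewrite relN Az.
have e3 : htv = q^-1 * `|eta| `^ q + sb by [].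
have e4 : Dp pairX p Jp (x n) z = h0v - pairX xi z + p^-1 * `|z| `^ p.
  by rewrite /Dp h0 /xi (nJp Jp p hJp) (pw_pq2 p1).
rewrite e1 e4; move: e2 e3; lra.
Qed.
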